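(* There exists $n_0$ such that for all $n\ge n_0$, $\operatorname{op}_{n,4}(123) > \operatorname{op}_{n,3}(123)$.
   Context: An ordered set partition of $[n]$ into $k$ blocks is a sequence $B_1/B_2/\cdots/B_k$ of nonempty, pairwise disjoint subsets of $[n]$ whose union is $[n]$; the order of the blocks matters, but not the order of elements within a block. Such a partition contains the pattern $123$ if there are block indices $i_1<i_2<i_3$ and elements $b_j\in B_{i_j}$ with $b_1<b_2<b_3$; otherwise it avoids $123$. $\operatorname{op}_{n,k}(123)$ is the number of $123$-avoiding ordered partitions of $[n]$ into $k$ blocks. *)

(* Defs.v *)
From mathcomp Require Import all_boot.
Set Implicit Arguments. Unset Strict Implicit. Unset Printing Implicit Defensive.

(* An ordered set partition B_1/.../B_k of [n] is encoded by its block-assignment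
   function f : 'I_n -> 'I_k (element x, standing for x+1 in [n], lies in block
   B_{f x + 1}).  Blocks are nonempty iff f is surjective; disjointness and
   covering are automatic.  This is a bijection with ordered set partitions. *)
Definition ord_partition (n k : nat) (f : {ffun 'I_n -> 'I_k}) : bool :=
  [forall j : 'I_k, exists x : 'I_n, f x == j].

Definition contains123 (n k : nat) (f : {ffun 'I_n -> 'I_k}) : bool :=
  [exists b1 : 'I_n, exists b2 : 'I_n, exists b3 : 'I_n,
     [&& b1 < b2, b2 < b3, f b1 < f b2 & f b2 < f b3]].

Definition op123 (n k : nat) : nat :=
  #|[set f : {ffun 'I_n -> 'I_k} | ord_partition f && ~~ contains123 f]|.

(* Main.v *)
Require Import Defs.
From mathcomp Require Import all_boot.
From mathcomp Require Import zify.

Set Implicit Arguments. Unset Strict Implicit. Unset Printing Implicit Defensive.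

Section Proof.
Variable n : nat.

Definition good (w : {ffun 'I_n -> 'I_3}) (p : 'I_n) : bool :=
  [exists q : 'I_n, (p < q) && (w q == w p)].

Definition hval (w : {ffun 'I_n -> 'I_3}) (p x : 'I_n) : nat :=
  w x + (w p < w x) + ((w p == w x :> nat) && (x <= p)).

Lemma hval_lt4 w p x : hval w p x < 4.
Proof.
rewrite /hval; have := ltn_ord (w x); have := ltn_ord (w p).
case: (ltngtP (w p) (w x)) => /= H1 H2 H3; case: (x <= p) => /=; lia.
Qed.

Definition splitf (w : {ffun 'I_n -> 'I_3}) (p : 'I_n) : {ffun 'I_n -> 'I_4} :=
  [ffun x => inord (hval w p x)].

Lemma split_val w p x : (splitf w p x : nat) = hval w p x.
Proof. by rewrite ffunE inordK // hval_lt4. Qed.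

Lemma hval_mono w p (x y : 'I_n) : x < y -> hval w p x < hval w p y -> w x < w y.
Proof.
move=> xy; rewrite /hval.
case: (ltngtP (w p) (w x)) => /= H1; case: (ltngtP (w p) (w y)) => /= H2;
case: (leqP x p) => /= H3; case: (leqP y p) => /= H4; lia.
Qed.

Lemma merge_hval (w : {ffun 'I_n -> 'I_3}) (p x : 'I_n) :
  (w x : nat) = if hval w p x <= w p then hval w p x else (hval w p x).-1.
Proof.
rewrite /hval.
case: (ltngtP (w p) (w x)) => /= H1; case: (leqP x p) => /= H3;
case: ifP => H; lia.
Qed.

Lemma split_avoid w p : ~~ contains123 w -> ~~ contains123 (splitf w p).
Proof.
move=> /negP H; apply/negP => /existsP [b1 /existsP [b2 /existsP [b3]]].
move=> /and4P [h12 h23 f12 f23]; apply: H.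
rewrite !split_val in f12 f23.
apply/existsP; exists b1; apply/existsP; exists b2; apply/existsP; exists b3.
apply/and4P; split => //; [exact: hval_mono h12 f12 | exact: hval_mono h23 f23].
Qed.

Lemma split_part w p : ord_partition w -> good w p -> ord_partition (splitf w p).
Proof.
move=> /forallP Hs /existsP [q /andP [pq /eqP wq]].
apply/forallP => j; apply/existsP.
have Hj := ltn_ord j; have Hc := ltn_ord (w p).
case: (ltngtP j (w p)) => Hjc.
- have /existsP [x /eqP wx] := Hs (inord j).
  exists x; apply/eqP; apply: val_inj; rewrite /= split_val /hval wx inordK; last lia.
  case: (ltngtP (w p) j) => /=; lia.
- case: (ltngtP j (w p).+1) => Hjc2.
  + lia.
  + have /existsP [x /eqP wx] := Hs (inord j.-1).
    exists x; apply/eqP; apply: val_inj; rewrite /= split_val /hval wx inordK; last lia.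
    case: (ltngtP (w p) j.-1) => /=; lia.
  + exists p; apply/eqP; apply: val_inj; rewrite /= split_val /hval eqxx leqnn ltnn /=; lia.
- exists q; apply/eqP; apply: val_inj; rewrite /= split_val /hval wq eqxx ltnn /=.
  rewrite leqNgt pq /=; lia.
Qed.

Lemma split_inj (w1 w2 : {ffun 'I_n -> 'I_3}) (p1 p2 : 'I_n) :
  w1 p1 = w2 p2 -> splitf w1 p1 = splitf w2 p2 -> w1 = w2 /\ p1 = p2.
Proof.
move=> ec es.
have eh x : hval w1 p1 x = hval w2 p2 x by rewrite -!split_val es.
have ew : w1 = w2.
  apply/ffunP => x; apply: ord_inj.
  by rewrite (merge_hval w1 p1 x) (merge_hval w2 p2 x) eh ec.
split => //; subst w2.
case: (ltngtP p1 p2) => H; last by apply: val_inj.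
- have := eh p2; rewrite /hval ec eqxx leqnn ltnn /= (leqNgt p2 p1) H /=; lia.
- have := eh p1; rewrite /hval -ec eqxx leqnn ltnn /= (leqNgt p1 p2) H /=; lia.
Qed.

Lemma good_card w : n - 3 <= #|[set p | good w p]|.
Proof.
set G := [set p | good w p].
have HC := cardsC G; rewrite card_ord in HC.
suff : #|~: G| <= 3 by lia.
have inj : {in ~: G &, injective w}.
  move=> x y; rewrite !inE => /existsPn Hx /existsPn Hy e.
  case: (ltngtP x y) => H; last by apply: val_inj.
  - by have := Hx y; rewrite H e eqxx.
  - by have := Hy x; rewrite H e eqxx.
rewrite -(card_in_imset inj).
by have := max_card (mem (w @: ~: G)); rewrite card_ord.
Qed.

Definition S3 := [set f : {ffun 'I_n -> 'I_3} | ord_partition f && ~~ contains123 f].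
Definition S4 := [set f : {ffun 'I_n -> 'I_4} | ord_partition f && ~~ contains123 f].

Definition T := [set x : {ffun 'I_n -> 'I_3} * 'I_n | (x.1 \in S3) && good x.1 x.2].

Lemma T_upper : #|T| <= #|S4| * 3.
Proof.
pose F (x : {ffun 'I_n -> 'I_3} * 'I_n) := (splitf x.1 x.2, x.1 x.2).
have inj : {in T &, injective F}.
  move=> [w1 p1] [w2 p2] _ _ [e1 e2].
  by have [-> ->] := split_inj e2 e1.
have -> : #|S4| * 3 = #|setX S4 [set: 'I_3]| by rewrite cardsX cardsT card_ord.
rewrite -(card_in_imset inj).
apply: subset_leq_card; apply/subsetP => y /imsetP [[w p] + ->].
rewrite !inE /= => /andP [/andP [Hp Ha] Hg].
by rewrite split_part // split_avoid.
Qed.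

Lemma T_lower : 7 <= n -> 4 * #|S3| <= #|T|.
Proof.
move=> Hn.
rewrite -[#|T|]sum1_card.
rewrite (eq_bigl (fun x => (x.1 \in S3) && good x.1 x.2)); last by move=> x; rewrite inE.
rewrite -(pair_big_dep (fun w => w \in S3) (fun w p => good w p) (fun _ _ => 1)) /=.
rewrite mulnC -sum_nat_const; apply: leq_sum => w _.
rewrite sum1_card.
apply: (@leq_trans #|[set p | good w p]|).
  by have := good_card w; lia.
by apply: subset_leq_card; apply/subsetP => p; rewrite inE.
Qed.

Lemma S4_nonempty : 4 <= n -> 0 < #|S4|.
Proof.
move=> Hn; apply/card_gt0P.
exists [ffun x : 'I_n => (inord (3 - x) : 'I_4)].
rewrite inE; apply/andP; split.
- apply/forallP => j; apply/existsP.
  have Hj := ltn_ord j.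
  have Hx : 3 - j < n by lia.
  exists (Ordinal Hx); apply/eqP; apply: val_inj; rewrite ffunE /= inordK; lia.
- apply/negP => /existsP [b1 /existsP [b2 /existsP [b3]]].
  move=> /and4P [h12 h23 f12 f23].
  move: f12; rewrite !ffunE !inordK; lia.
Qed.

End Proof.

Theorem theorem9 : exists n0 : nat, forall n : nat, n0 <= n -> op123 n 3 < op123 n 4.
Proof.
exists 7 => n Hn.
have H1 := T_lower Hn.
have H2 := T_upper n.
have H3 : 0 < #|S4 n| by apply: S4_nonempty; lia.
rewrite /op123.
change (#|S3 n| < #|S4 n|).
lia.
Qed.
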